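(* Let $C$ and $C'$ be configurations on the same board of $l$ rows and $w$ columns containing $n$ tiles. If $C$ can be reconfigured into $C'$ by a sequence of steps each in direction west, south, or east, then there exists a step sequence $S$ of length $O(n l w^2)$, using only west, south and east steps, such that applying $S$ to $C$ yields $C'$.
   Context: A board is a rectangular region of the square lattice, formally a partition $B=(O,W)$ of a rectangular set of grid points into open locations $O$ and blocked locations $W$. A tile is a labeled unit square centered on an open location. A configuration $C=(B,P)$ consists of a board $B$ and a set $P$ of tiles, no two at the same location and none at a blocked location. A step in direction $d\in\{N,E,S,W\}$ transforms a configuration as follows: consider translating every tile by one unit in direction $d$; every tile whose translation would land on a blocked location is temporarily added to the blocked set, and this is repeated until no remaining tile's translation lands on a blocked location; then all remaining tiles are translated by one unit in direction $d$. A step sequence is a sequence of directions, applied as successive steps. $C$ can be reconfigured into $C'$ if some step sequence applied to $C$ yields $C'$. *)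

(* Defs.v *)
From mathcomp Require Import all_boot.
Set Implicit Arguments. Unset Strict Implicit. Unset Printing Implicit Defensive.

(* Directions of steps.  Rows are numbered 0..l-1 from north to south,
   columns 0..w-1 from west to east. *)
Inductive dir := North | East | South | West.

Definition opp (d : dir) : dir :=
  match d with North => South | South => North | East => West | West => East end.

Definition pos (l w : nat) := ('I_l * 'I_w)%type.

(* The neighbour of p in direction d, or None if it lies outside the
   rectangular board (outside locations behave as blocked). *)
Definition shift {l w : nat} (d : dir) (p : pos l w) : option (pos l w) :=
  match d with
  | North => if nat_of_ord p.1 is r.+1
             then omap (fun r' : 'I_l => (r', p.2)) (insub r) else None
  | South => omap (fun r' : 'I_l => (r', p.2)) (insub (nat_of_ord p.1).+1)
  | East  => omap (fun c' : 'I_w => (p.1, c')) (insub (nat_of_ord p.2).+1)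
  | West  => if nat_of_ord p.2 is c.+1
             then omap (fun c' : 'I_w => (p.1, c')) (insub c) else None
  end.

(* A configuration on the board with blocked set Wb is given by the tile
   placement t : each location holds at most one labeled tile. *)
Definition valid {L : Type} {l w : nat} (Wb : {set pos l w})
  (t : {ffun pos l w -> option L}) : Prop :=
  forall p, p \in Wb -> t p = None.

Definition occupied {L : Type} {l w : nat} (t : {ffun pos l w -> option L}) :=
  [set p | isSome (t p)].

Definition ntiles {L : Type} {l w : nat} (t : {ffun pos l w -> option L}) : nat :=
  #|occupied t|.

(* One round of the "temporarily blocked" closure: a tile becomes blocked
   if its translate is a blocked location, outside the board, or an
   already temporarily blocked tile. *)
Definition stuck_step {L : Type} {l w : nat} (Wb : {set pos l w}) (d : dir)
  (t : {ffun pos l w -> option L}) (X : {set pos l w}) : {set pos l w} :=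
  [set p | isSome (t p) &&
           match shift d p with
           | None => true
           | Some q => (q \in Wb) || (q \in X)
           end].

(* Repeating until stabilisation: #|pos| rounds always suffice (the
   iteration is monotone and increasing). *)
Definition stuck {L : Type} {l w : nat} (Wb : {set pos l w}) (d : dir)
  (t : {ffun pos l w -> option L}) : {set pos l w} :=
  iter #|{: pos l w}| (stuck_step Wb d t) set0.

(* A step in direction d: stuck tiles stay, all other tiles move by one. *)
Definition step {L : Type} {l w : nat} (Wb : {set pos l w})
  (t : {ffun pos l w -> option L}) (d : dir) : {ffun pos l w -> option L} :=
  [ffun q => if q \in stuck Wb d t then t q
             else match shift (opp d) q with
                  | Some p => if isSome (t p) && (p \notin stuck Wb d t)
                              then t p else None
                  | None => None
                  end].

Definition run {L : Type} {l w : nat} (Wb : {set pos l w})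
  (s : seq dir) (t : {ffun pos l w -> option L}) : {ffun pos l w -> option L} :=
  foldl (step Wb) t s.

Definition wse (d : dir) : bool := if d is North then false else true.

(* Main.v *)
From HB Require Import structures.
Require Import Defs.
From mathcomp Require Import all_boot zify.
Set Implicit Arguments. Unset Strict Implicit. Unset Printing Implicit Defensive.


Definition dir_eqb (a b : dir) : bool :=
  match a, b with
  | North, North | East, East | South, South | West, West => true
  | _, _ => false end.
Lemma dir_eqP : Equality.axiom dir_eqb.
Proof. by case; case; constructor. Qed.
HB.instance Definition _ := hasDecEq.Build dir dir_eqP.

Definition horiz (d : dir) : bool := if d is West then true else if d is East then true else false.

Definition cf (D : nat) (u : seq dir) (a : nat) : nat :=
  foldl (fun a d => if d is West then a.-1 else minn a.+1 D) a u.

Definition eqv (w : nat) (u v : seq dir) :=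
  forall D a, D <= w -> a <= D -> cf D u a = cf D v a.

Lemma cf_le D u a : a <= D -> cf D u a <= D.
Proof.
elim: u a => [|d u IH] a /= h //; apply: IH.
case: d => /=; lia.
Qed.

Lemma cf_cat D u v a : cf D (u ++ v) a = cf D v (cf D u a).
Proof. by rewrite /cf foldl_cat. Qed.

Lemma eqv_refl w u : eqv w u u.
Proof. by []. Qed.

Lemma eqv_trans w u v x : eqv w u v -> eqv w v x -> eqv w u x.
Proof. by move=> h1 h2 D a hD ha; rewrite h1 // h2. Qed.

Lemma eqv_cons w d u v : eqv w u v -> eqv w (d :: u) (d :: v).
Proof.
move=> h D a hD ha /=; apply: h => //; case: d => /=; lia.
Qed.

Lemma eqv_catr w u v s : eqv w u v -> eqv w (u ++ s) (v ++ s).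
Proof. by move=> h D a hD ha; rewrite !cf_cat h. Qed.

Lemma cf_nseqW D k a : cf D (nseq k West) a = a - k.
Proof. elim: k a => [|k IH] a /=; [lia|rewrite IH; lia]. Qed.

Lemma cf_nseqE D k a : a <= D -> cf D (nseq k East) a = minn (a + k) D.
Proof. elim: k a => [|k IH] a h /=; [lia|rewrite IH; lia]. Qed.

Definition flip (d : dir) := if d is West then East else West.

Lemma cap w x : horiz x -> eqv w (nseq w.+1 x) (nseq w x).
Proof.
case: x => //= _ D a hD ha.
  by rewrite (@cf_nseqE D w.+1 a) // cf_nseqE //; lia.
by rewrite (@cf_nseqW D w.+1 a) cf_nseqW; lia.
Qed.

Lemma ident2 w x b1 b2 : horiz x -> 0 < b1 <= b2 ->
  eqv w (flip x :: nseq b1 x ++ nseq b2 (flip x)) (nseq b1.-1 x ++ nseq b2 (flip x)).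
Proof.
case: x => //= _ hb D a hD ha.
  change (cf D (nseq b1 East ++ nseq b2 West) a.-1 = cf D (nseq b1.-1 East ++ nseq b2 West) a).
  rewrite !cf_cat !cf_nseqW !cf_nseqE //; lia.
change (cf D (nseq b1 West ++ nseq b2 East) (minn a.+1 D) = cf D (nseq b1.-1 West ++ nseq b2 East) a).
rewrite !cf_cat !cf_nseqW !cf_nseqE //; lia.
Qed.

Fixpoint expand (y : dir) (s : seq nat) : seq dir :=
  if s is b :: s' then nseq b y ++ expand (flip y) s' else [::].

Fixpoint dec (m : nat) (s : seq nat) : bool :=
  if s is x :: s' then (0 < x) && (x <= m) && dec x.-1 s' else true.

Lemma dec_le m m' s : m <= m' -> dec m s -> dec m' s.
Proof. case: s => //= x s h /andP[/andP[h1 h2] h3]; rewrite h1 h3 /=; lia. Qed.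

Lemma dec_sum m s : dec m s -> sumn s <= m * m.
Proof.
elim: s m => [|x s IH] m //= /andP[/andP[h1 h2] /IH h3].
have : x.-1 * x.-1 <= m.-1 * m.-1 by apply: leq_mul; lia.
nia.
Qed.

Lemma size_expand y s : size (expand y s) = sumn s.
Proof. by elim: s y => //= b s IH y; rewrite size_cat size_nseq IH. Qed.

Lemma horiz_flip x : horiz (flip x).
Proof. by case: x. Qed.

Lemma all_expand y s : horiz y -> all horiz (expand y s).
Proof.
elim: s y => //= b s IH y hy; by rewrite all_cat IH ?horiz_flip // andbT all_nseq hy orbT.
Qed.

Lemma flipK x : horiz x -> flip (flip x) = x.
Proof. by case: x. Qed.

Definition nfw (x : dir) b1 tl := nseq b1 x ++ expand (flip x) tl.

Lemma nf_exists w u : 0 < w -> all horiz u -> u <> [::] ->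
  exists x b1 tl, [/\ horiz x, 0 < b1 <= w, dec w tl & eqv w u (nfw x b1 tl)].
Proof.
move=> w0; elim: u => [|x' u IH] //= /andP[hx' hu] _.
case: u IH hu => [|y u] IH hu.
  exists x', 1, [::]; split => //; try lia.
have [x [b1 [tl [hx hb1 htl he]]]] := IH hu ltac:(done).
have e1 := eqv_cons x' he.
have [ex|nex] := eqVneq x' x.
  subst x'. case: (ltnP b1 w) => hb.
    exists x, b1.+1, tl; split => //; try lia.
  have eb : b1 = w by lia. subst b1.
  exists x, w, tl; split => //; try lia.
  apply: (eqv_trans e1); rewrite /nfw -cat_cons.
  have -> : x :: nseq w x = nseq w.+1 x by [].
  by apply: eqv_catr; apply: cap.
have fx : x' = flip x.
  by move: hx' hx nex; clear; case: x'; case: x.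
subst x'.
case: tl htl he e1 => [|b2 tl] htl he e1.
  exists (flip x), 1, [:: b1]; split => //; rewrite ?horiz_flip //=.
  - by apply/andP; split; [lia|].
  - by rewrite /nfw /= flipK // cats0.
case: (ltnP b2 b1) => hb.
  exists (flip x), 1, [:: b1, b2 & tl]; split => //; rewrite ?horiz_flip //=.
  - move: htl => /= /andP[/andP[h1 h2] h3]; rewrite h3; apply/andP; split; lia.
  - by rewrite /nfw /= flipK.
have key : eqv w (flip x :: nfw x b1 (b2 :: tl))
   (nseq b1.-1 x ++ nseq b2 (flip x) ++ expand x tl).
  have := eqv_catr (expand x tl) (@ident2 w x b1 b2 hx ltac:(lia)).
  by rewrite /nfw /= flipK // -!catA.
have e3 := eqv_trans e1 key.
clear e1 key. case: b1 hb1 hb e3 he => [|b1'] hb1 hb e3 he; try lia.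
case: b1' hb1 hb e3 he => [|b1''] hb1 hb e3 he.
  exists (flip x), b2, tl; split; rewrite ?horiz_flip //.
  - move: htl => /= /andP[/andP[h1 h2] h3]; lia.
  - move: htl => /= /andP[/andP[h1 h2] h3]; apply: dec_le h3; lia.
  - by rewrite /nfw flipK.
exists x, b1''.+1, (b2 :: tl); split => //; try lia.
by rewrite /nfw /= flipK.
Qed.

Lemma horiz_short w u : all horiz u ->
  exists v, [/\ all horiz v, size v <= w + w * w & eqv w u v].
Proof.
move=> hu.
case: (posnP w) => [w0|wpos].
  exists [::]; split => //; move=> D a hD ha.
  have -> : a = 0 by lia. have -> : D = 0 by lia.
  rewrite /=; elim: u {hu} => //= d u IH; by case: d.
case: u hu => [|y u] hu; first by exists [::].
have [x [b1 [tl [hx hb1 htl he]]]] := nf_exists wpos hu ltac:(done).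
exists (nfw x b1 tl); split => //.
- by rewrite /nfw all_cat all_expand ?horiz_flip // andbT all_nseq hx orbT.
- rewrite /nfw size_cat size_nseq size_expand.
  have := dec_sum htl; lia.
Qed.

Section Board.
Variables (L : Type) (l w : nat) (Wb : {set pos l w}).
Notation P := (pos l w).
Notation cfg := {ffun P -> option L}.

Lemma pos_eq (p q : P) : (p.1 : nat) = q.1 -> (p.2 : nat) = q.2 -> p = q.
Proof. by case: p q => [a b] [c d] /= /val_inj -> /val_inj ->. Qed.

Lemma pair_eta (p : P) : p = (p.1, p.2). Proof. by case: p. Qed.

Definition nbr (d : dir) (p q : P) : Prop :=
  match d with
  | North => (q.2 : nat) = p.2 /\ (q.1 : nat).+1 = p.1
  | South => (q.2 : nat) = p.2 /\ (p.1 : nat).+1 = q.1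
  | East => (q.1 : nat) = p.1 /\ (p.2 : nat).+1 = q.2
  | West => (q.1 : nat) = p.1 /\ (q.2 : nat).+1 = p.2
  end.

Lemma ord_eq n (a b : 'I_n) : (a : nat) = b -> a = b.
Proof. exact: val_inj. Qed.

Lemma shift_some d (p q : P) : shift d p = Some q <-> nbr d p q.
Proof.
case: p q => r c [r' c']; case: d => /=.
- case E: (nat_of_ord r) => [|k] /=; first by split => // [[_]]; lia.
  case: insubP => [u hk hu|hk] /=; split.
  + by case=> <- <-; rewrite hu.
  + by case=> e1 e2; congr Some; congr pair; apply: val_inj => /=; rewrite ?hu; lia.
  + by [].
  + by case=> _ e; exfalso; move/negP: hk; apply; have := ltn_ord r'; lia.
- case: insubP => [u hk hu|hk] /=; split.
  + by case=> <- <-; rewrite hu.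
  + by case=> e1 e2; congr Some; congr pair; apply: val_inj => /=; rewrite ?hu; lia.
  + by [].
  + by case=> _ e; exfalso; move/negP: hk; apply; have := ltn_ord c'; lia.
- case: insubP => [u hk hu|hk] /=; split.
  + by case=> <- <-; rewrite hu.
  + by case=> e1 e2; congr Some; congr pair; apply: val_inj => /=; rewrite ?hu; lia.
  + by [].
  + by case=> _ e; exfalso; move/negP: hk; apply; have := ltn_ord r'; lia.
- case E: (nat_of_ord c) => [|k] /=; first by split => // [[_]]; lia.
  case: insubP => [u hk hu|hk] /=; split.
  + by case=> <- <-; rewrite hu.
  + by case=> e1 e2; congr Some; congr pair; apply: val_inj => /=; rewrite ?hu; lia.
  + by [].
  + by case=> _ e; exfalso; move/negP: hk; apply; have := ltn_ord c'; lia.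
Qed.

Lemma shift_opp d (p q : P) : shift d p = Some q -> shift (opp d) q = Some p.
Proof. by rewrite !shift_some; case: d => /= [[]|[]|[]|[]]. Qed.

Lemma oppK d : opp (opp d) = d. Proof. by case: d. Qed.

Section Dir.
Variables (d : dir) (t : cfg).

Lemma stuck_stepM : {homo stuck_step Wb d t : X Y / X \subset Y}.
Proof.
move=> X Y sXY; apply/subsetP => p; rewrite !inE => /andP[-> /=].
by case: shift => // q /orP[->//|/(subsetP sXY) ->]; rewrite orbT.
Qed.

Lemma stuck_fix : stuck_step Wb d t (stuck Wb d t) = stuck Wb d t.
Proof. exact: (fixsetK stuck_stepM). Qed.

Lemma stuckE p : (p \in stuck Wb d t) = isSome (t p) &&
  match shift d p with None => true | Some q => (q \in Wb) || (q \in stuck Wb d t) end.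
Proof. by rewrite -{1}stuck_fix inE. Qed.

Lemma stuck_lfp X : stuck_step Wb d t X \subset X -> stuck Wb d t \subset X.
Proof.
move=> h; rewrite /stuck; elim: #|_| => [|n IH] /=; first exact: sub0set.
by apply: subset_trans h; apply: stuck_stepM.
Qed.

Lemma stuck_occ p : p \in stuck Wb d t -> isSome (t p).
Proof. by rewrite stuckE => /andP[]. Qed.

Definition mv (p : P) := if p \in stuck Wb d t then p else odflt p (shift d p).

Lemma nstuck p : isSome (t p) -> p \notin stuck Wb d t ->
  exists q, [/\ shift d p = Some q, q \notin Wb, q \notin stuck Wb d t & mv p = q].
Proof.
move=> hp hs; move: (hs); rewrite stuckE hp /= /mv (negbTE hs).
case: shift => // q; rewrite negb_or => /andP[h1 h2]; by exists q.
Qed.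

Lemma mv_cases p : isSome (t p) ->
  (p \in stuck Wb d t /\ mv p = p) \/ (p \notin stuck Wb d t /\ shift d p = Some (mv p)).
Proof.
move=> hp; case: (boolP (p \in stuck Wb d t)) => hs.
  by left; rewrite /mv hs.
by right; have [q [h1 _ _ ->]] := nstuck hp hs.
Qed.

Hypothesis tv : valid Wb t.

Lemma step_mv p : isSome (t p) -> step Wb t d (mv p) = t p.
Proof.
move=> hp; rewrite /step ffunE.
case: (boolP (p \in stuck Wb d t)) => hs; first by rewrite /mv hs hs.
have [q [h1 h2 h3 ->]] := nstuck hp hs.
by rewrite (negbTE h3) (shift_opp h1) hp hs.
Qed.

Lemma step_inv q : isSome (step Wb t d q) -> exists2 p, isSome (t p) & q = mv p.
Proof.
rewrite /step ffunE; case: (boolP (q \in stuck Wb d t)) => hs.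
  by move=> h; exists q => //; rewrite /mv hs.
case E: shift => [p|] //; case: (boolP (isSome (t p) && (p \notin stuck Wb d t))) => // /andP[hp hps] _.
exists p => //; rewrite /mv (negbTE hps).
by move/shift_opp: E; rewrite oppK => ->.
Qed.

Lemma mv_inj : {in [pred p | isSome (t p)] &, injective mv}.
Proof.
move=> p1 p2 h1 h2; rewrite !inE in h1 h2.
case: (mv_cases h1) => [[s1 e1]|[s1 e1]]; case: (mv_cases h2) => [[s2 e2]|[s2 e2]].
- by rewrite e1 e2.
- move=> e; have [q [_ _ h3 e3]] := nstuck h2 s2.
  by move: h3; rewrite -e3 -e e1 s1.
- move=> e; have [q [_ _ h3 e3]] := nstuck h1 s1.
  by move: h3; rewrite -e3 e e2 s2.
- move=> e; move: e1 e2; rewrite e => /shift_opp e1 /shift_opp e2.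
  by move: e1; rewrite e2 => -[].
Qed.

Lemma mv_Wb p : isSome (t p) -> mv p \notin Wb.
Proof.
move=> hp; case: (boolP (p \in stuck Wb d t)) => hs.
  rewrite /mv hs; apply/negP => /tv; by case: (t p) hp.
by have [q [_ h2 _ ->]] := nstuck hp hs.
Qed.

Lemma step_valid : valid Wb (step Wb t d).
Proof.
move=> q hq; case E: (step Wb t d q) => [x|] //.
have [p hp e] := step_inv (q := q) ltac:(by rewrite E).
by move: (mv_Wb hp); rewrite -e hq.
Qed.

Lemma occ_step : occupied (step Wb t d) = mv @: occupied t.
Proof.
apply/setP => q; rewrite inE; apply/idP/imsetP.
  by move/step_inv => [p hp ->]; exists p; rewrite ?inE.
by case=> p; rewrite inE => hp ->; rewrite step_mv.
Qed.

Lemma ntiles_step : ntiles (step Wb t d) = ntiles t.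
Proof.
rewrite /ntiles occ_step card_in_imset //.
by move=> p1 p2; rewrite !inE => h1 h2; apply: mv_inj.
Qed.

Lemma step_id : (forall p, isSome (t p) -> mv p = p) -> step Wb t d = t.
Proof.
move=> h; apply/ffunP => q.
case E: (t q) => [x|].
  by rewrite -{1}(h q) ?E // step_mv E.
case E2: (step Wb t d q) => [y|] //.
have [p hp e] := step_inv (q := q) ltac:(by rewrite E2).
by move: (hp); rewrite -(h p hp) -e E.
Qed.

End Dir.

Definition key (d : dir) (c : nat) := if d is East then w.-1 - c else c.

Lemma key_lt d (c : 'I_w) : key d c < w.
Proof. have := ltn_ord c; case: d => /=; lia. Qed.

Lemma key_inj d (c1 c2 : 'I_w) : key d c1 = key d c2 -> c1 = c2.
Proof. move=> h; apply: val_inj; move: h (ltn_ord c1) (ltn_ord c2); case: d => /=; lia. Qed.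

Lemma key_opp d (c : 'I_w) : horiz d -> key (opp d) c = w.-1 - key d c.
Proof. have := ltn_ord c; case: d => //= *; lia. Qed.

Lemma key_surj d k : k < w -> exists c : 'I_w, key d c = k.
Proof.
move=> hk; have hk' : key d k < w by case: d => /=; lia.
exists (Ordinal hk') => /=; case: d {hk'} => /=; lia.
Qed.

Lemma nbr_key d (p q : P) : horiz d ->
  nbr d p q <-> (q.1 = p.1 /\ key d q.2 + 1 = key d p.2).
Proof.
have := ltn_ord p.2; have := ltn_ord q.2.
case: d => //= h1 h2 _; split => -[e1 e2]; split; try (by rewrite e1); try (by apply: val_inj; exact: e1); lia.
Qed.

Definition connk d (r : 'I_l) (a b : 'I_w) :=
  [forall j : 'I_w, (key d a <= key d j <= key d b) ==> ((r, j) \notin Wb)].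

Definition ahead d (p : P) : {set P} :=
  [set q : P | (q.1 == p.1) && (key d q.2 < key d p.2) && connk d p.1 q.2 p.2].

Lemma aheadP d (p q : P) : reflect
  [/\ q.1 = p.1, key d q.2 < key d p.2 &
      forall j : 'I_w, key d q.2 <= key d j <= key d p.2 -> (p.1, j) \notin Wb]
  (q \in ahead d p).
Proof.
rewrite inE; apply: (iffP idP).
  case/andP=> /andP[/eqP e1 e2] /forallP h; split => // j hj.
  by move/implyP: (h j); apply.
case=> e1 e2 h; rewrite e1 eqxx e2 /=; apply/forallP => j; apply/implyP; exact: h.
Qed.

Lemma ahead_opp d (p q : P) : horiz d -> (q \in ahead (opp d) p) = (p \in ahead d q).
Proof.
move=> hd; apply/aheadP/aheadP.
  case=> e1 e2 h; rewrite !key_opp // in e2; split => //.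
  - have := key_lt d p.2; have := key_lt d q.2; lia.
  - move=> j hj; rewrite e1; apply: h; rewrite !key_opp //.
    have := key_lt d p.2; have := key_lt d q.2; have := key_lt d j; lia.
case=> e1 e2 h; rewrite !key_opp //; split => //.
- have := key_lt d p.2; have := key_lt d q.2; lia.
- move=> j hj; rewrite e1; apply: h; rewrite !key_opp // in hj.
  have := key_lt d p.2; have := key_lt d q.2; have := key_lt d j; lia.
Qed.

Lemma ahead_trans d (p q : P) : q \in ahead d p -> ahead d q \subset ahead d p.
Proof.
case/aheadP=> e1 e2 h; apply/subsetP => x /aheadP[f1 f2 g]; apply/aheadP; split.
- by rewrite f1.
- lia.
- move=> j hj; case: (leqP (key d j) (key d q.2)) => hj2.
    by rewrite -e1; apply: g; lia.
  by apply: h; lia.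
Qed.


Lemma ahead_succ e (x y : P) : y.1 = x.1 -> key e y.2 + 1 = key e x.2 ->
  x \notin Wb -> y \notin Wb -> #|ahead e x| = #|ahead e y| + 1.
Proof.
move=> ey ek hx hy.
have -> : ahead e x = y |: ahead e y.
  apply/setP => z; rewrite in_setU1; apply/idP/idP.
    case/aheadP=> e1 e2 hc.
    case: (ltngtP (key e (z : P).2) (key e y.2)) => hk; [|lia|]; last first.
      by apply/orP; left; apply/eqP; apply: pos_eq; [rewrite e1 ey|congr nat_of_ord; exact: key_inj hk].
    apply/orP; right; apply/aheadP; split; [by rewrite e1 ey|lia|].
    by move=> j hj; rewrite ey; apply: hc; lia.
  case/orP => [/eqP ->|].
    apply/aheadP; split => //; first lia.
    move=> j hj; case: (ltngtP (key e j) (key e y.2)) => hk; first lia.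
      have -> : j = x.2 by apply: (@key_inj e); lia.
      by rewrite -pair_eta.
    by rewrite -ey (key_inj hk) -pair_eta.
  case/aheadP=> e1 e2 hc; apply/aheadP; split; [by rewrite e1 ey|lia|].
  move=> j hj; case: (leqP (key e j) (key e y.2)) => hk.
    by rewrite -ey; apply: hc; lia.
  have -> : j = x.2 by apply: (@key_inj e); lia.
  by rewrite -pair_eta.
rewrite cardsU1; suff -> : y \notin ahead e y by lia.
by apply/negP => /aheadP[_ ]; rewrite ltnn.
Qed.

Definition aheadc e (t : cfg) (p : P) := #|ahead e p :\: occupied t|.

Section Horiz.
Variables (d : dir) (t : cfg).
Hypotheses (hd : horiz d) (tv : valid Wb t).

Lemma open_occ (p : P) : isSome (t p) -> p \notin Wb.
Proof. by move=> hp; apply/negP => /tv; case: (t p) hp. Qed.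


Lemma shift_none_key (p : P) : shift d p = None -> key d p.2 = 0.
Proof.
move=> E; case: (posnP (key d p.2)) => // hk.
have [c hc] := key_surj d (k := (key d p.2).-1) ltac:(have := key_lt d p.2; lia).
have : nbr d p (p.1, c) by apply/nbr_key => //=; split => //; lia.
by move/shift_some; rewrite E.
Qed.

Lemma shift_key (p q : P) : shift d p = Some q -> q.1 = p.1 /\ key d q.2 + 1 = key d p.2.
Proof. by move/shift_some/(nbr_key _ _ hd). Qed.

Lemma key_shift (p q : P) : q.1 = p.1 -> key d q.2 + 1 = key d p.2 -> shift d p = Some q.
Proof. by move=> e1 e2; apply/shift_some/(nbr_key _ _ hd). Qed.

Lemma stuck_ahead (p : P) : isSome (t p) -> (p \in stuck Wb d t) = (ahead d p \subset occupied t).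
Proof.
move=> hp; apply/idP/idP.
  move=> hs.
  have sub : stuck_step Wb d t [set x | isSome (t x) && (ahead d x \subset occupied t)]
      \subset [set x | isSome (t x) && (ahead d x \subset occupied t)].
    apply/subsetP => x; rewrite !inE => /andP[hx hsh]; rewrite hx /=.
    apply/subsetP => y hy; rewrite inE; case/aheadP: (hy) => e1 e2 hc.
    case E: (shift d x) hsh => [q|] hsh; last first.
      by move: e2; rewrite (shift_none_key E).
    have [f1 f2] := shift_key E.
    case/orP: hsh => [qW|].
      exfalso; move: (hc q.2 ltac:(lia)); rewrite -f1 -pair_eta qW //.
    rewrite inE => /andP[hq hsub].
    case: (ltnP (key d y.2) (key d q.2)) => hlt.
      have := subsetP hsub y; rewrite [y \in occupied t]inE; apply; apply/aheadP; split => //; first by rewrite f1.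
      by move=> j hj; rewrite f1; apply: hc; lia.
    have -> : y = q; last by [].
    apply: pos_eq; first by rewrite e1 f1.
    congr nat_of_ord; apply: (@key_inj d). by apply/eqP; rewrite eqn_leq hlt andbT; move: e2; rewrite -f2 addn1 ltnS.
  by have := subsetP (stuck_lfp sub) p hs; rewrite inE => /andP[].
move=> hsub.
suff : forall n (x : P), key d x.2 <= n -> isSome (t x) -> ahead d x \subset occupied t ->
    x \in stuck Wb d t by apply => //.
elim=> [|n IH] x hn hx hsx; rewrite stuckE hx /=; case E: (shift d x) => [q|] //.
  by have [_ ] := shift_key E; lia.
have [f1 f2] := shift_key E.
case: (boolP (q \in Wb)) => //= qW.
have hqa : q \in ahead d x.
  apply/aheadP; split => //; first lia.
  move=> j hj; case: (ltnP (key d j) (key d x.2)) => hj2.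
    have -> : j = q.2 by apply: (@key_inj d); lia.
    by rewrite -f1 -pair_eta.
  have -> : j = x.2 by apply: (@key_inj d); lia.
  by rewrite -pair_eta open_occ.
have hq : isSome (t q) by have := subsetP hsx q hqa; rewrite inE.
apply: IH => //; first lia.
exact: subset_trans (ahead_trans hqa) hsx.
Qed.


Lemma mvS (p : P) : p \in stuck Wb d t -> mv d t p = p.
Proof. by rewrite /mv => ->. Qed.

Lemma mvN (p : P) : isSome (t p) -> p \notin stuck Wb d t ->
  (mv d t p).1 = p.1 /\ key d (mv d t p).2 + 1 = key d p.2.
Proof. move=> hp hs; have [q [E _ _ ->]] := nstuck hp hs; exact: shift_key. Qed.

Lemma mv_row (p : P) : isSome (t p) -> (mv d t p).1 = p.1.
Proof.
move=> hp; case: (boolP (p \in stuck Wb d t)) => hs; first by rewrite mvS.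
by case: (mvN hp hs).
Qed.

Lemma mv_ahead (p q : P) : isSome (t p) -> isSome (t q) ->
  (mv d t q \in ahead d (mv d t p)) = (q \in ahead d p).
Proof.
move=> hp hq; have r1 := mv_row hp; have r2 := mv_row hq.
apply/idP/idP.
  case/aheadP=> f1 f2 g.
  have e1 : q.1 = p.1 by rewrite -r1 -r2.
  have hkq : key d (mv d t q).2 <= key d q.2 /\ key d q.2 <= key d (mv d t q).2 + 1.
    case: (boolP (q \in stuck Wb d t)) => hs; first by rewrite mvS //; lia.
    by have [_ ] := mvN hq hs; lia.
  have hkp : key d (mv d t p).2 <= key d p.2 /\ key d p.2 <= key d (mv d t p).2 + 1.
    case: (boolP (p \in stuck Wb d t)) => hs; first by rewrite mvS //; lia.
    by have [_ ] := mvN hp hs; lia.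
  have hne : key d q.2 != key d p.2.
    apply/negP => /eqP ek.
    have eq : q = p by apply: pos_eq; [rewrite e1 | congr nat_of_ord; exact: key_inj ek].
    by move: f2; rewrite eq ltnn.
  have hlt : key d q.2 < key d p.2 by move: hne; lia.
  apply/aheadP; split => // j hj.
  case: (leqP (key d j) (key d (mv d t p).2)) => hj2.
    by rewrite -r1; apply: g; lia.
  have -> : j = p.2 by apply: (@key_inj d); lia.
  by rewrite -pair_eta open_occ.
case/aheadP=> e1 e2 hc.
case: (boolP (p \in stuck Wb d t)) => sp.
  have sq : q \in stuck Wb d t.
    rewrite stuck_ahead //; apply: subset_trans (@ahead_trans d p q _) _.
      by apply/aheadP.
    by rewrite -stuck_ahead.
  by rewrite !mvS //; apply/aheadP.
have [_ k1] := mvN hp sp.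
apply/aheadP; split; first by rewrite r1 r2.
  case: (boolP (q \in stuck Wb d t)) => sq.
    rewrite mvS //; case: (ltnP (key d q.2) (key d (mv d t p).2)) => // hh.
    have : shift d p = Some q by apply: key_shift => //; lia.
    by move=> E; move: sp; rewrite stuckE hp E sq orbT.
  by have [_ ] := mvN hq sq; lia.
move=> j hj; rewrite r1.
case: (leqP (key d q.2) (key d j)) => hj2.
  by apply: hc; lia.
case: (boolP (q \in stuck Wb d t)) => sq.
  by move: hj; rewrite mvS //; lia.
have [r3 k3] := mvN hq sq.
have -> : j = (mv d t q).2 by apply: (@key_inj d); lia.
by rewrite -e1 -r2 -pair_eta mv_Wb.
Qed.

Lemma occ_ahead (A : P -> {set P})
  (hA : forall p q : P, isSome (t p) -> isSome (t q) ->
     (mv d t q \in A (mv d t p)) = (q \in A p)) (p : P) :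
  isSome (t p) ->
  #|A (mv d t p) :&: occupied (step Wb t d)| = #|A p :&: occupied t|.
Proof.
move=> hp.
have -> : A (mv d t p) :&: occupied (step Wb t d) = mv d t @: (A p :&: occupied t).
  apply/setP => z; rewrite inE occ_step; apply/idP/idP.
    case/andP => hz /imsetP[q hq ez]; apply/imsetP; exists q => //.
    have hq2 : isSome (t q) by move: hq; rewrite inE.
    by rewrite inE hq andbT -(hA _ _ hp hq2) -ez.
  case/imsetP => q; rewrite inE => /andP[hq hq'] ->; apply/andP; split.
    by rewrite hA //; move: hq'; rewrite inE.
  by apply/imsetP; exists q.
rewrite card_in_imset // => p1 p2; rewrite !inE => /andP[_ h1] /andP[_ h2].
exact: mv_inj.
Qed.

Lemma cntI (A B : {set P}) : #|A :&: B| <= #|A|.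
Proof. exact/subset_leq_card/subsetIl. Qed.

Lemma stuck_cnt (p : P) : isSome (t p) -> (p \in stuck Wb d t) = (aheadc d t p == 0).
Proof. by move=> hp; rewrite stuck_ahead // /aheadc cards_eq0 setD_eq0. Qed.

Lemma cnt_d (p : P) : isSome (t p) ->
  aheadc d (step Wb t d) (mv d t p) = aheadc d t p - (p \notin stuck Wb d t).
Proof.
move=> hp; rewrite /aheadc !cardsD (occ_ahead (A := ahead d)) //; last first.
  by move=> *; apply: mv_ahead.
case: (boolP (p \in stuck Wb d t)) => hs /=; first by rewrite mvS // subn0.
have [r1 k1] := mvN hp hs.
have := ahead_succ r1 k1 (open_occ hp) (mv_Wb d tv hp).
move: (hs); rewrite stuck_cnt // /aheadc cardsD => h1 h2.
have := cntI (ahead d p) (occupied t). set a := #|ahead d p|; set b := #|ahead d (mv d t p)|; set c := #|ahead d p :&: occupied t|; lia.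
Qed.

Lemma cnt_opp (p : P) : isSome (t p) ->
  aheadc (opp d) (step Wb t d) (mv d t p) = aheadc (opp d) t p + (p \notin stuck Wb d t).
Proof.
move=> hp; rewrite /aheadc !cardsD (occ_ahead (A := ahead (opp d))) //; last first.
  by move=> p1 q1 h1 h2; rewrite !ahead_opp //; apply: mv_ahead.
case: (boolP (p \in stuck Wb d t)) => hs /=; first by rewrite mvS // addn0.
have [r1 k1] := mvN hp hs.
have k2 : key (opp d) p.2 + 1 = key (opp d) (mv d t p).2.
  rewrite !key_opp //; have := key_lt d p.2; lia.
have := ahead_succ (esym r1) k2 (mv_Wb d tv hp) (open_occ hp).
have := cntI (ahead (opp d) p) (occupied t); set a := #|ahead (opp d) p|; set b := #|ahead (opp d) (mv d t p)|; set c := #|ahead (opp d) p :&: occupied t|; lia.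
Qed.

End Horiz.
Lemma ahead_bound e (p : P) : horiz e -> #|ahead e p| + #|ahead (opp e) p| <= w.
Proof.
move=> he.
have hdis : ahead e p :&: ahead (opp e) p = set0.
  apply/setP => q; rewrite inE in_set0 ahead_opp //.
  apply/negP => /andP[/aheadP[_ h1 _] /aheadP[_ h2 _]]; lia.
have hsub : ahead e p :|: ahead (opp e) p \subset pair p.1 @: [set: 'I_w].
  apply/subsetP => q; rewrite inE => /orP[/aheadP[e1 _ _]|/aheadP[e1 _ _]];
  by apply/imsetP; exists q.2; rewrite ?inE // -e1 -pair_eta.
have := subset_leq_card hsub; have := leq_imset_card (pair p.1) [set: 'I_w].
rewrite cardsT card_ord.
have := cardsUI (ahead e p) (ahead (opp e) p); rewrite hdis cards0.
set a := #|ahead e p|; set b := #|ahead (opp e) p|; set c := #|ahead e p :|: ahead (opp e) p|.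
set x := #|_ @: _|; lia.
Qed.

Definition aW (t : cfg) p := aheadc West t p.
Definition aE (t : cfg) p := aheadc East t p.

Lemma step_cnt d (t : cfg) (p : P) : horiz d -> valid Wb t -> isSome (t p) ->
  let p' := mv d t p in let t' := step Wb t d in
  [/\ aW t' p' = cf (aW t p + aE t p) [:: d] (aW t p),
      aW t' p' + aE t' p' = aW t p + aE t p,
      p'.1 = p.1 &
      (p'.2 : nat) + aW t p = p.2 + aW t' p'].
Proof.
move=> hd tv hp /=.
have hr := mv_row hd hp.
case: d hd hr => // _ hr.
- have c1 := cnt_d (d:=East) (erefl true) tv hp; have c2 := cnt_opp (d:=East) (erefl true) tv hp.
  have hs := stuck_cnt (d:=East) (erefl true) tv hp.
  rewrite /aW /aE; simpl opp in c2.
  case: (boolP (p \in stuck Wb East t)) hs => hs /esym hs'.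
    rewrite mvS // in c1 c2 *; rewrite c1 c2 /=.
    move/eqP: hs' => ->; rewrite ?addn0 ?subn0; split => //; lia.
  have [_ k] := mvN (d:=East) (erefl true) hp hs; rewrite /= in k.
  rewrite c1 c2 /=; move: hs'; rewrite /aheadc => hs'.
  have := ltn_ord p.2; have := ltn_ord (mv East t p).2.
  set a := #|ahead West p :\: occupied t|; set b := #|ahead East p :\: occupied t|.
  move: hs'; rewrite -/b => hs'.
  split => //; lia.
- have c1 := cnt_d (d:=West) (erefl true) tv hp; have c2 := cnt_opp (d:=West) (erefl true) tv hp.
  have hs := stuck_cnt (d:=West) (erefl true) tv hp.
  rewrite /aW /aE; simpl opp in c2.
  case: (boolP (p \in stuck Wb West t)) hs => hs /esym hs'.
    rewrite mvS // in c1 c2 *; rewrite c1 c2 /=.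
    move/eqP: hs' => ->; rewrite ?addn0 ?subn0; split => //; lia.
  have [_ k] := mvN (d:=West) (erefl true) hp hs; rewrite /= in k.
  rewrite c1 c2 /=; move: hs'; rewrite /aheadc => hs'.
  set a := #|ahead West p :\: occupied t|; set b := #|ahead East p :\: occupied t|.
  move: hs'; rewrite -/a => hs'.
  split => //; lia.
Qed.

Fixpoint trk (u : seq dir) (t : cfg) (p : P) : P :=
  if u is d :: u' then trk u' (step Wb t d) (mv d t p) else p.

Lemma run_cons d u (t : cfg) : run Wb (d :: u) t = run Wb u (step Wb t d).
Proof. by []. Qed.

Lemma run_valid u (t : cfg) : valid Wb t -> valid Wb (run Wb u t).
Proof. elim: u t => //= d u IH t tv; apply: IH; exact: step_valid. Qed.

Lemma run_trk u (t : cfg) (p : P) : valid Wb t -> isSome (t p) ->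
  run Wb u t (trk u t p) = t p.
Proof.
elim: u t p => //= d u IH t p tv hp.
rewrite (IH (step Wb t d) (mv d t p) (step_valid d tv)); first exact: step_mv.
by rewrite step_mv.
Qed.

Lemma run_inv u (t : cfg) (q : P) : valid Wb t -> isSome (run Wb u t q) ->
  exists2 p, isSome (t p) & q = trk u t p.
Proof.
elim: u t q => [|d u IH] t q tv /=; first by move=> h; exists q.
move=> h; have [p1 hp1 ->] := IH _ _ (step_valid d tv) h.
have [p hp ->] := step_inv hp1; by exists p.
Qed.

Lemma trk_cnt u (t : cfg) (p : P) : all horiz u -> valid Wb t -> isSome (t p) ->
  [/\ aW (run Wb u t) (trk u t p) = cf (aW t p + aE t p) u (aW t p),
      aW (run Wb u t) (trk u t p) + aE (run Wb u t) (trk u t p) = aW t p + aE t p,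
      (trk u t p).1 = p.1 &
      ((trk u t p).2 : nat) + aW t p = p.2 + aW (run Wb u t) (trk u t p)].
Proof.
elim: u t p => [|d u IH] t p /=; first by move=> *; split => //; lia.
case/andP=> hd hu tv hp.
have [e1 e2 e3 e4] := step_cnt hd tv hp.
have [f1 f2 f3 f4] := IH (step Wb t d) (mv d t p) hu (step_valid d tv) (ltac:(by rewrite step_mv)).
split.
- by rewrite f1 e2 e1.
- by rewrite f2 e2.
- by rewrite f3 e3.
- move: e4 f4 e2; set a := aW (step Wb t d) (mv d t p); set b := aE (step Wb t d) (mv d t p); lia.
Qed.

Lemma aWE_le (t : cfg) (p : P) : aW t p + aE t p <= w.
Proof.
have := ahead_bound p (e := West) erefl; rewrite /aW /aE /aheadc /=.
have := subset_leq_card (subsetDl (ahead West p) (occupied t)).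
have := subset_leq_card (subsetDl (ahead East p) (occupied t)).
set a := #|ahead East p :\: occupied t|; set b := #|ahead West p :\: occupied t|; set c := #|ahead East p|; set e := #|ahead West p|; lia.
Qed.

Lemma bridge1 u v (t : cfg) (q : P) x : all horiz u -> all horiz v -> eqv w u v ->
  valid Wb t -> run Wb u t q = Some x -> run Wb v t q = Some x.
Proof.
move=> hu hv he tv E.
have [p hp eq] := run_inv (u := u) tv (q := q) ltac:(by rewrite E).
have [a1 a2 a3 a4] := trk_cnt hu tv hp.
have [b1 b2 b3 b4] := trk_cnt hv tv hp.
have ha : cf (aW t p + aE t p) u (aW t p) = cf (aW t p + aE t p) v (aW t p).
  apply: he; [exact: aWE_le|lia].
have -> : q = trk v t p.
  rewrite eq; apply: pos_eq; first by rewrite a3 b3.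
  move: a4 b4; rewrite a1 b1 ha; lia.
by rewrite run_trk // -(run_trk u tv hp) -eq.
Qed.

Lemma bridge u v (t : cfg) : all horiz u -> all horiz v -> eqv w u v ->
  valid Wb t -> run Wb u t = run Wb v t.
Proof.
move=> hu hv he tv; apply/ffunP => q.
case E: (run Wb u t q) => [x|]; first by rewrite (bridge1 hu hv he tv E).
case E2: (run Wb v t q) => [y|] //.
have he' : eqv w v u by move=> D a hD ha; rewrite he.
by rewrite (bridge1 hv hu he' tv E2) in E.
Qed.

Definition phi (t : cfg) := \sum_(p in occupied t) (p.1 : nat).

Lemma phi_step d (t : cfg) : valid Wb t ->
  phi (step Wb t d) = \sum_(p in occupied t) ((mv d t p).1 : nat).
Proof.
move=> tv; rewrite /phi occ_step big_imset //.
by move=> p1 p2; rewrite !inE => h1 h2; apply: mv_inj.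
Qed.

Lemma phi_horiz d (t : cfg) : horiz d -> valid Wb t -> phi (step Wb t d) = phi t.
Proof.
move=> hd tv; rewrite phi_step //; apply: eq_bigr => p; rewrite inE => hp.
by rewrite (mv_row hd hp).
Qed.

Lemma mv_south (t : cfg) (p : P) : isSome (t p) ->
  ((mv South t p).1 : nat) = p.1 + (p \notin stuck Wb South t).
Proof.
move=> hp; case: (mv_cases South hp) => [[hs ->]|[hs /shift_some [_ e]]].
  by rewrite hs addn0.
by rewrite hs -e addn1.
Qed.

Lemma phi_south (t : cfg) : valid Wb t -> step Wb t South <> t -> phi t < phi (step Wb t South).
Proof.
move=> tv hne; rewrite phi_step //.
case: (pickP [pred p | isSome (t p) && (p \notin stuck Wb South t)]) => [p /andP[hp hs]|h].
  rewrite /phi (bigD1 p) ?inE //= [X in _ < X](bigD1 p) ?inE //=.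
  rewrite mv_south // hs addn1 -addSn; apply: leq_add => //.
  apply: leq_sum => q /andP[hq _]; rewrite inE in hq; rewrite mv_south //; lia.
exfalso; apply: hne; apply: step_id => // p hp.
by move: (h p) => /= /negbT; rewrite hp /= negbK => /mvS.
Qed.

Lemma phi_south_w (t : cfg) (p : P) : valid Wb t -> isSome (t p) ->
  p \notin stuck Wb South t -> phi t < phi (step Wb t South).
Proof.
move=> tv hp hs; rewrite phi_step //.
rewrite /phi (bigD1 p) ?inE //= [X in _ < X](bigD1 p) ?inE //=.
rewrite mv_south // hs addn1 -addSn; apply: leq_add => //.
apply: leq_sum => q /andP[hq _]; rewrite inE in hq; rewrite mv_south //; lia.
Qed.

Lemma step_id_south (t : cfg) :
  (forall p, isSome (t p) -> p \in stuck Wb South t) -> step Wb t South = t.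
Proof. by move=> h; apply: step_id => p hp; apply/mvS/h. Qed.

Lemma phi_le (t : cfg) : phi t <= ntiles t * l.-1.
Proof.
rewrite /phi /ntiles -sum_nat_const; apply: leq_sum => p _.
have := ltn_ord p.1; lia.
Qed.

Lemma run_cat a b (t : cfg) : run Wb (a ++ b) t = run Wb b (run Wb a t).
Proof. by rewrite /run foldl_cat. Qed.

Lemma ntiles_run s (t : cfg) : valid Wb t -> ntiles (run Wb s t) = ntiles t.
Proof.
elim: s t => //= d s IH t tv; rewrite -(ntiles_step d t).
exact: (IH _ (step_valid d tv)).
Qed.

Lemma phi_run_horiz s (t : cfg) : all horiz s -> valid Wb t -> phi (run Wb s t) = phi t.
Proof.
elim: s t => //= d s IH t /andP[hd hs] tv.
by rewrite (IH _ hs (step_valid d tv)) phi_horiz.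
Qed.

Lemma empty_cfg (t : cfg) : ntiles t = 0 -> forall q, t q = None.
Proof.
move/eqP; rewrite cards_eq0 => /eqP e q.
have : q \notin occupied t by rewrite e in_set0.
by rewrite inE; case: (t q).
Qed.

Lemma split_wse s : all wse s -> all horiz s \/
  exists h s2, [/\ s = h ++ South :: s2, all horiz h & all wse s2].
Proof.
elim: s => [|d s IH] /=; first by left.
case/andP=> hd hs; case: d hd => // _.
- case: (IH hs) => [h|[h [s2 [e1 e2 e3]]]]; first by left.
  by right; exists (East :: h), s2; rewrite e1.
- by right; exists [::], s.
- case: (IH hs) => [h|[h [s2 [e1 e2 e3]]]]; first by left.
  by right; exists (West :: h), s2; rewrite e1.
Qed.

Lemma horiz_wse s : all horiz s -> all wse s.
Proof. by elim: s => //= d s IH /andP[h1 h2]; rewrite IH // andbT; case: d h1. Qed.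

Lemma pos_dims (t : cfg) : 0 < ntiles t -> 0 < l /\ 0 < w.
Proof.
by case/card_gt0P => p _; have := ltn_ord p.1; have := ltn_ord p.2; lia.
Qed.

Lemma phi_lt (t : cfg) : 0 < ntiles t -> phi t < ntiles t * l.
Proof.
move=> hn; have [hl _] := pos_dims hn; have := phi_le t.
set n := ntiles t; set x := phi t; nia.
Qed.

Lemma main_ind k : forall s (t : cfg), size s <= k -> all wse s -> valid Wb t -> 0 < ntiles t ->
  exists s', [/\ all wse s', size s' <= (w + w * w).+1 * (ntiles t * l - phi t)
           & run Wb s' t = run Wb s t].
Proof.
elim: k => [|k IH] s t hk hs tv hn.
  case: s hk hs => // _ _; exists [::]; split => //.
have hlt := phi_lt hn.
case: (split_wse hs) => [hh|[h [s2 [es hh hs2]]]].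
  have [v [hv sv ev]] := horiz_short w hh.
  exists v; split; first exact: horiz_wse.
    apply: (leq_trans sv); rewrite -[X in X <= _]muln1; apply: leq_mul => //; lia.
  by apply: bridge => //; move=> D a hD ha; rewrite ev.
set t1 := run Wb h t.
have tv1 : valid Wb t1 by exact: run_valid.
case: (pickP [pred p | isSome (t1 p) && (p \notin stuck Wb South t1)]) => [p /andP[hp hs']|hnone]; last first.
  have e : step Wb t1 South = t1.
    apply: step_id_south => p hp; move: (hnone p) => /= /negbT.
    by rewrite hp /= negbK.
  have := IH (h ++ s2) t; case.
  - by move: hk; rewrite es !size_cat /=; lia.
  - by rewrite all_cat hs2 horiz_wse.
  - by [].
  - by [].
  move=> s' [h1 h2 h3]; exists s'; split => //.
  by rewrite h3 es !run_cat run_cons -/t1 e.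
have tv2 := step_valid South tv1.
have hphi := phi_south_w tv1 hp hs'.
have ht1 : ntiles (step Wb t1 South) = ntiles t.
  by rewrite ntiles_step ntiles_run.
have hp1 : phi t1 = phi t by rewrite phi_run_horiz.
have := IH s2 (step Wb t1 South); case.
- by move: hk; rewrite es !size_cat /=; lia.
- by [].
- by [].
- by rewrite ht1.
move=> s2' [h1 h2 h3].
have [v [hv sv ev]] := horiz_short w hh.
exists (v ++ South :: s2'); split.
- by rewrite all_cat /= h1 horiz_wse.
- rewrite size_cat /=; move: h2; rewrite ht1.
  have := phi_lt (t := step Wb t1 South) ltac:(by rewrite ht1).
  rewrite ht1 => hlt2.
  set B := (w + w * w).+1; set n := ntiles t * l; set a := phi t; set b := phi _.
  move: hp1 hphi; rewrite -/a -/b => hp1 hphi.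
  have : B * (n - b) + B <= B * (n - a) by rewrite addnC -mulnS; apply: leq_mul => //; lia.
  nia.
- rewrite run_cat run_cons es run_cat run_cons -/t1 -h3.
  have -> : run Wb v t = t1 by rewrite /t1; apply: bridge => //; move=> D a hD ha; rewrite ev.
  by [].
Qed.

End Board.

Theorem lemma2 :
  exists c : nat,
  forall (L : Type) (l w : nat) (Wb : {set pos l w})
         (t t' : {ffun pos l w -> option L}),
    valid Wb t -> valid Wb t' ->
    (exists s : seq dir, all wse s /\ run Wb s t = t') ->
    exists s : seq dir,
      [/\ all wse s, size s <= c * (ntiles t * l * w ^ 2) & run Wb s t = t'].
Proof.
exists 3 => L l w Wb t t' tv _ [s [hs <-]].
case: (posnP (ntiles t)) => hn.
  exists [::]; split => //; apply/ffunP => q.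
  have hn' : ntiles (run Wb s t) = 0 by rewrite ntiles_run.
  by rewrite /= (empty_cfg hn) (empty_cfg hn').
have [s' [h1 h2 h3]] := main_ind (k := size s) (leqnn _) hs tv hn.
exists s'; split => //.
have [hl hw] := pos_dims hn.
apply: (leq_trans h2).
set n := ntiles t; set a := phi t.
have : (w + w * w).+1 * (n * l - a) <= (w + w * w).+1 * (n * l) by apply: leq_mul => //; lia.
move=> h; apply: (leq_trans h); rewrite expnS expn1.
have : (w + w * w).+1 <= 3 * (w * w) by nia.
move=> h4; have := leq_mul h4 (leqnn (n * l)); nia.
Qed.
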